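(* Let $k \geq 3$ and $n > 3k+1$ be integers such that $n$ is $k$-admissible. Let $(V,\mathcal{A})$ be a non-reducible partial $k$-star design of order $n$ with $u(n,k)$ stars, let $L$ be the leftover of $(V,\mathcal{A})$, and let $s$ be a suitable $k$-precentral function for $L$. If $T$ is a subset of $V$ with $5 \leq |T| \leq n-5$, then $\Delta_T \geq 0$, where $\Delta_T$ is the number of edges of $L$ incident with at least one vertex of $T$ minus $k\sum_{x\in T}s(x)$.
   Context: A $k$-star is a copy of $K_{1,k}$; its vertex of degree $k$ is the centre and the others are leaves. A partial $k$-star design of order $n$ is a pair $(V,\mathcal{A})$ where $V$ is a set of $n$ vertices and $\mathcal{A}$ is a set of edge-disjoint $k$-stars that are subgraphs of the complete graph $K_V$. Its leftover $L$ is the graph on $V$ whose edges are the edges of $K_V$ lying in no star of $\mathcal{A}$. A positive integer $n$ is $k$-admissible if $\binom{n}{2}\equiv 0\pmod{k}$. Here $u(n,k)=2\lfloor\frac{n-2}{k}\rfloor-1$ if $n\not\equiv 1\pmod k$ and $u(n,k)=\frac{2(n-1)}{k}-2$ if $n\equiv 1 \pmod k$. $(V,\mathcal{A})$ is reducible if $n \equiv 1 \pmod{k}$, $|\mathcal{A}|=u(n,k)$, and some vertex is the centre of at least one star in $\mathcal{A}$ and a leaf of no star in $\mathcal{A}$; otherwise non-reducible. For a graph $G$ with $|E(G)|\equiv 0\pmod k$: a $k$-precentral function is $p:V(G)\to\mathbb{Z}_{\ge0}$ with $\sum_{x}p(x)=\frac1k|E(G)|$; $p^*(x)=p(x)-\frac{1}{2k}\deg_G(x)$;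 $p$ is proportional if $p(x)\in\{\lfloor\frac{1}{2k}\deg_G(x)\rfloor,\lceil\frac{1}{2k}\deg_G(x)\rceil\}$ for all $x$; a proportional $p$ is minimal if it minimises $\sum_x|p^*(x)|$ among proportional $k$-precentral functions. Under a minimal $m$, a vertex $y$ is bad if $\deg_G(y)<k$ and $m(y)=1$, and an edge $y_1y_2$ is bad if $m(y_1)=m(y_2)=0$. A $k$-precentral function $s$ for $G$ is suitable if one of the following holds: (i) $s=m$ for a minimal $m$ under which no vertex or edge is bad; (ii) for a minimal $m$ under which vertex $y$ is bad, $s(y)=m(y)-1=0$, $s(z)=m(z)+1$ for some vertex $z$ with $m^*(z)=\min_{x\in V(G)} m^*(x)$, and $s(x)=m(x)$ for all other $x$; (iii) for a minimal $m$ under which an edge $y_1y_2$ with $\deg_G(y_1)\le\deg_G(y_2)$ is bad, $s(y_2)=m(y_2)+1=1$, $s(z)=m(z)-1$ for some vertex $z$ with $m^*(z)=\max_{x\in V(G)}m^*(x)$, and $s(x)=m(x)$ for all other $x$. *)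

(* Defs.v *)
From mathcomp Require Import all_boot all_order all_algebra.
Set Implicit Arguments. Unset Strict Implicit. Unset Printing Implicit Defensive.
Import Order.TTheory GRing.Theory Num.Theory.

Section Defs.
Variable V : finType.

(* A k-star is represented by (centre, set of leaves). *)
Definition is_star (k : nat) (S : V * {set V}) : Prop :=
  S.1 \notin S.2 /\ #|S.2| = k.

Definition star_edges (S : V * {set V}) : {set {set V}} :=
  [set [set S.1; l] | l in S.2].

Definition partial_star_design (k : nat) (A : {set (V * {set V})}) : Prop :=
  (forall S, S \in A -> is_star k S) /\
  (forall S1 S2, S1 \in A -> S2 \in A -> S1 != S2 ->
     [disjoint star_edges S1 & star_edges S2]).

Definition leftover (A : {set (V * {set V})}) : {set {set V}} :=
  [set e : {set V} | (#|e| == 2) && [forall S in A, e \notin star_edges S]].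

Definition admissible (k n : nat) : bool := k %| 'C(n, 2).

Definition u_nk (n k : nat) : nat :=
  if n %% k == 1 then (2 * (n - 1)) %/ k - 2 else 2 * ((n - 2) %/ k) - 1.

Definition reducible (n k : nat) (A : {set (V * {set V})}) : Prop :=
  n %% k = 1 /\ #|A| = u_nk n k /\
  exists x : V, (exists2 S, S \in A & S.1 = x) /\ (forall S, S \in A -> x \notin S.2).

(* graph G on V given by its edge set E (a set of 2-subsets of V) *)
Definition deg (E : {set {set V}}) (x : V) : nat := #|[set e in E | x \in e]|.

Definition precentral (k : nat) (E : {set {set V}}) (p : V -> nat) : Prop :=
  k %| #|E| /\ \sum_(x : V) p x = #|E| %/ k.

Definition pstar (k : nat) (E : {set {set V}}) (p : V -> nat) (x : V) : rat :=
  ((p x)%:R - (deg E x)%:R / (2 * k)%:R)%R.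

Definition proportional (k : nat) (E : {set {set V}}) (p : V -> nat) : Prop :=
  forall x, p x = deg E x %/ (2 * k) \/ p x = (deg E x + (2 * k).-1) %/ (2 * k).

Definition minimal (k : nat) (E : {set {set V}}) (m : V -> nat) : Prop :=
  precentral k E m /\ proportional k E m /\
  forall p : V -> nat, precentral k E p -> proportional k E p ->
    (\sum_(x : V) `|pstar k E m x| <= \sum_(x : V) `|pstar k E p x|)%R.

Definition bad_vertex (k : nat) (E : {set {set V}}) (m : V -> nat) (y : V) : Prop :=
  deg E y < k /\ m y = 1.

Definition bad_edge (E : {set {set V}}) (m : V -> nat) (y1 y2 : V) : Prop :=
  [set y1; y2] \in E /\ m y1 = 0 /\ m y2 = 0.

Definition suitable (k : nat) (E : {set {set V}}) (s : V -> nat) : Prop :=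
  precentral k E s /\
  ( (exists m, minimal k E m /\ (forall y, ~ bad_vertex k E m y) /\
        (forall y1 y2, ~ bad_edge E m y1 y2) /\ (forall x, s x = m x))
  \/ (exists m y z, minimal k E m /\ bad_vertex k E m y /\
        s y = 0 /\ m y - 1 = 0 /\
        (forall x, (pstar k E m z <= pstar k E m x)%R) /\ s z = m z + 1 /\
        (forall x, x != y -> x != z -> s x = m x))
  \/ (exists m y1 y2 z, minimal k E m /\ bad_edge E m y1 y2 /\
        deg E y1 <= deg E y2 /\
        s y2 = m y2 + 1 /\ m y2 + 1 = 1 /\
        (forall x, (pstar k E m x <= pstar k E m z)%R) /\ s z + 1 = m z /\
        (forall x, x != y2 -> x != z -> s x = m x))).

Definition delta (k : nat) (E : {set {set V}}) (s : V -> nat) (T : {set V}) : int :=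
  (#|[set e in E | [exists x in T, x \in e]]|%:Z - (k * \sum_(x in T) s x)%:Z)%R.

End Defs.

(* Main.v *)
Require Import Defs.
From mathcomp Require Import all_boot all_order all_algebra.
From mathcomp Require Import zify ring lra.
Import Order.TTheory GRing.Theory Num.Theory.

Module Helpers.
Set Implicit Arguments. Unset Strict Implicit. Unset Printing Implicit Defensive.

Section Part1.
Variable V : finType.

Lemma sum_in_card (A B : {set V}) : \sum_(x in A) ((x \in B) : nat) = #|A :&: B|.
Proof.
rewrite -big_mkcondr /= sum1_card; apply: eq_card => x; by rewrite !inE.
Qed.

Lemma deg_sum (E : {set {set V}}) x : deg E x = \sum_(e in E) ((x \in e) : nat).
Proof.
rewrite /deg -big_mkcondr /= sum1_card; apply: eq_card => e; by rewrite !inE.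
Qed.

Lemma sum_deg_T (E : {set {set V}}) (T : {set V}) :
  \sum_(x in T) deg E x = \sum_(e in E) #|e :&: T|.
Proof.
under eq_bigr do rewrite deg_sum.
rewrite exchange_big /=; apply: eq_bigr => e _.
by rewrite sum_in_card setIC.
Qed.

Lemma card_bigcup_le (I : finType) (P : pred I) (F : I -> {set V}) :
  #|\bigcup_(i | P i) F i| <= \sum_(i | P i) #|F i|.
Proof.
apply: (@big_ind2 {set V} nat (fun (U : {set V}) (s : nat) => #|U| <= s)) => [|U1 s1 U2 s2 h1 h2|i _].
- by rewrite cards0.
- by apply: leq_trans (leq_card_setU _ _).1 (leq_add h1 h2).
- done.
Qed.

Definition cross (E : {set {set V}}) (T : {set V}) : nat :=
  \sum_(e in E) ((#|e :&: T| == 1) : nat).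

Lemma card_set_sum (E : {set {set V}}) (P : pred {set V}) :
  #|[set e in E | P e]| = \sum_(e in E) (P e : nat).
Proof.
rewrite -big_mkcondr /= sum1_card; apply: eq_card => e; by rewrite !inE.
Qed.

Lemma inc_identity (E : {set {set V}}) (T : {set V}) :
  (forall e, e \in E -> #|e| = 2) ->
  2 * #|[set e in E | [exists x in T, x \in e]]| =
  cross E T + \sum_(x in T) deg E x.
Proof.
move=> H2; rewrite sum_deg_T /cross -big_split /=.
rewrite (card_set_sum E (fun e => [exists x in T, x \in e])) big_distrr /=.
apply: eq_bigr => e eE.
have hle : #|e :&: T| <= 2 by rewrite -(H2 e eE) subset_leq_card // subsetIl.
case: (boolP [exists x in T, x \in e]) => ex.
- have hpos : 0 < #|e :&: T|.
    rewrite card_gt0; apply/set0Pn; case/existsP: ex => x /andP [xT xe].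
    by exists x; rewrite inE xe xT.
  by move: hle hpos; case: #|e :&: T| => [|[|[|]]].
- have -> : #|e :&: T| = 0.
    apply/eqP; rewrite cards_eq0; apply/eqP/setP => x; rewrite !inE.
    apply/negbTE; apply/andP => -[xe xT]; move/negP: ex; apply.
    by apply/existsP; exists x; rewrite xT xe.
  by [].
Qed.

End Part1.


Section Part2.
Variable V : finType.

Lemma cross_lb (k : nat) (A : {set V * {set V}}) (T : {set V}) :
  (forall S, S \in A -> is_star k S) ->
  #|T| * #|~: T| <= cross (leftover A) T + k * #|A|.
Proof.
move=> Hst.
set E := leftover A.
pose f := fun p : V * V => [set p.1; p.2].
set F := [set f p | p in setX T (~: T)].
have cardF : #|F| = #|T| * #|~: T|.
  rewrite card_in_imset ?cardsX // => p q; rewrite !inE /f.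
  case: p => [p1 p2]; case: q => [q1 q2] /= /andP [p1T p2T] /andP [q1T q2T] e.
  have h1 : p1 \in [set q1; q2] by rewrite -e set21.
  have h2 : p2 \in [set q1; q2] by rewrite -e set22.
  rewrite !inE in h1 h2.
  case/orP: h1 => /eqP h1; last by move: p1T; rewrite h1 (negbTE q2T).
  case/orP: h2 => /eqP h2; first by move: p2T; rewrite h2 q1T.
  by rewrite h1 h2.
set H := \bigcup_(S in A) star_edges S.
have cH : #|H| <= k * #|A|.
  apply: leq_trans (card_bigcup_le _ _) _.
  rewrite mulnC -sum_nat_const; apply: leq_sum => S SA.
  case: (Hst S SA) => _ <-; exact: leq_imset_card.
have sub : F \subset [set e in E | #|e :&: T| == 1] :|: H.
  apply/subsetP => e /imsetP [[x y] /setXP [/= xT]]; rewrite inE => yT ->; rewrite /f /=.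
  have xy : x != y by apply: contraNneq yT => <-.
  have c1 : #|[set x; y] :&: T| == 1.
    have -> : [set x; y] :&: T = [set x].
      apply/setP => z; rewrite !inE.
      case: (eqVneq z x) => [->|zx]; first by rewrite xT.
      case: (eqVneq z y) => [zy|zy] /=; last by [].
      by rewrite zy (negbTE yT).
    by rewrite cards1.
  case eE : ([set x; y] \in E); first by rewrite inE [_ \in [set _ in _ | _]]inE eE c1.
  rewrite inE; apply/orP; right; move: eE; rewrite /E /leftover inE cards2 xy /= => /negbT.
  rewrite negb_forall => /existsP [S]; rewrite negb_imply negbK => /andP [SA eS].
  by apply/bigcupP; exists S.
rewrite -cardF /cross -(card_set_sum E (fun e => #|e :&: T| == 1)).
apply: leq_trans (subset_leq_card sub) _.
by apply: leq_trans (leq_card_setU _ _).1 (leq_add (leqnn _) cH).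
Qed.

End Part2.


Lemma poly1 (a b : nat) :
  5 * (a * b + 3 * a + 4 * b + 8) * ((a + 2) * (b + 3)) >= ((a + 4) * (b + 3)) * ((b + 3) * (2 * (a + 4) - 2)).
Proof. nia. Qed.
Lemma poly2 (b c : nat) :
  5 * (3 * b + c + 7) * (b + c + 5) >= (3 * b + c + 11) * ((b + 3) * 5).
Proof. nia. Qed.
Lemma poly3 (e b r : nat) :
  5 * (e * b + 3 * e + 4 * b + 9 + r) * ((e + 2) * (b + 3) + r + 1) >= ((e + 4) * (b + 3) + r + 1) * ((b + 3) * (2 * e + 7)).
Proof. nia. Qed.

Lemma arith_K (n k : nat) : 3 <= k -> 3 * k + 3 <= n ->
  5 * (n - 5) * (n - 1 - 2 * k) >= (n - 1) * (k * u_nk n k).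
Proof.
move=> hk hn; rewrite /u_nk.
have k0 : 0 < k by lia.
case: ifP => hmod.
- have e1 : n = (n %/ k) * k + 1 by rewrite {1}(divn_eq n k) (eqP hmod).
  move: (n %/ k) e1 => q e1.
  have e2 : (2 * (n - 1)) %/ k = 2 * q.
    by rewrite e1 addnK mulnA mulnK.
  rewrite e2; clear e2 hmod.
  have hq : 3 < q.
    rewrite ltnNge; apply/negP => hq; have : q * k <= 3 * k by rewrite leq_mul2r hq orbT.
    lia.
  move: (q - 4) (k - 3) (subnK hq) (subnK hk) => a b ea eb.
  rewrite -ea -eb in e1; subst n; rewrite -ea -eb.
  have -> : (a + 4) * (b + 3) + 1 - 5 = a * b + 3 * a + 4 * b + 8 by nia.
  have -> : (a + 4) * (b + 3) + 1 - 1 - 2 * (b + 3) = (a + 2) * (b + 3) by nia.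
  have -> : (a + 4) * (b + 3) + 1 - 1 = (a + 4) * (b + 3) by nia.
  exact: poly1.
- have e1 : n - 2 = ((n - 2) %/ k) * k + (n - 2) %% k by rewrite {1}(divn_eq (n - 2) k).
  have hr : (n - 2) %% k < k by rewrite ltn_pmod.
  move: ((n - 2) %/ k) ((n - 2) %% k) e1 hr => a r e1 hr; clear hmod.
  have ha : 2 < a.
    rewrite ltnNge; apply/negP => ha; have : a * k <= 2 * k by rewrite leq_mul2r ha orbT.
    lia.
  have en : n = a * k + r + 2 by lia.
  clear e1; subst n.
  move: (k - 3) (subnK hk) => b eb; rewrite -eb in hr hn *.
  case: (leqP 4 a) => ha4; last first.
  + have a3 : a = 3 by lia.
    subst a.
    have hr1 : 1 <= r by lia.
    move: (r - 1) (subnK hr1) => c ec; rewrite -ec.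
    have -> : 3 * (b + 3) + (c + 1) + 2 - 5 = 3 * b + c + 7 by lia.
    have -> : 3 * (b + 3) + (c + 1) + 2 - 1 - 2 * (b + 3) = b + c + 5 by lia.
    have -> : 3 * (b + 3) + (c + 1) + 2 - 1 = 3 * b + c + 11 by lia.
    have -> : 2 * 3 - 1 = 5 by [].
    exact: poly2.
  + move: (a - 4) (subnK ha4) => e ee; rewrite -ee.
    have -> : (e + 4) * (b + 3) + r + 2 - 5 = e * b + 3 * e + 4 * b + 9 + r by nia.
    have -> : (e + 4) * (b + 3) + r + 2 - 1 - 2 * (b + 3) = (e + 2) * (b + 3) + r + 1 by nia.
    have -> : (e + 4) * (b + 3) + r + 2 - 1 = (e + 4) * (b + 3) + r + 1 by nia.
    have -> : 2 * (e + 4) - 1 = 2 * e + 7 by lia.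
    exact: poly3.
Qed.

Lemma bin2_mul2 n : 'C(n, 2) * 2 = n * (n - 1).
Proof.
elim: n => [|n IH]; first by [].
rewrite binS bin1 mulnDl IH; case: n {IH} => [|n] //; nia.
Qed.

Lemma n_ge (k n : nat) : 3 <= k -> 3 * k + 1 < n -> admissible k n -> 3 * k + 3 <= n.
Proof.
move=> hk hn; rewrite /admissible => hdiv.
rewrite leqNgt; apply/negP => hlt.
have en : n = 3 * k + 2 by lia.
have : k %| 'C(n, 2) * 2 by rewrite dvdn_mulr.
rewrite bin2_mul2 en.
have -> : (3 * k + 2) * (3 * k + 2 - 1) = k * (9 * k + 9) + 2 by lia.
rewrite dvdn_addr ?dvdn_mulr // => /dvdn_leq; lia.
Qed.


Section Part4.
Variable V : finType.

Lemma ceil_eq (d D : nat) : 0 < D ->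
  (d + D.-1) %/ D = if d %% D == 0 then d %/ D else (d %/ D).+1.
Proof.
move=> D0.
rewrite {1}(divn_eq d D) -addnA divnMDl //.
case: eqP => [->|hr].
- rewrite add0n (@divn_small D.-1) ?addn0 //; lia.
- have hr' : 0 < d %% D by lia.
  have -> : d %% D + D.-1 = 1 * D + (d %% D).-1 by lia.
  rewrite divnMDl // (@divn_small (d %% D).-1); first by lia.
  have := ltn_pmod d D0; lia.
Qed.

Local Open Scope ring_scope.

Lemma pstar_val k (E : {set {set V}}) (p : V -> nat) x :
  (0 < k)%N ->
  pstar k E p x = (p x)%:R - (deg E x %/ (2 * k))%:R - ((deg E x %% (2 * k))%:R / (2 * k)%:R).
Proof.
move=> k0; rewrite /pstar.
set D := (2 * k)%N.
have D0 : D%:R != 0 :> rat by rewrite pnatr_eq0 /D; lia.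
rewrite {1}(divn_eq (deg E x) D) natrD natrM.
by field.
Qed.

Lemma prop_info k (E : {set {set V}}) (p : V -> nat) x :
  (0 < k)%N -> proportional k E p ->
  let q := (deg E x %/ (2 * k))%N in let r := (deg E x %% (2 * k))%N in
  let a : rat := r%:R / (2 * k)%:R in
  0 <= a /\ a < 1 /\ (a = 0 <-> r = 0%N) /\
  ((p x = q /\ pstar k E p x = - a) \/
   ((0 < r)%N /\ 0 < a /\ p x = q.+1 /\ pstar k E p x = 1 - a)).
Proof.
move=> k0 hp q r a.
have D0 : 0 < (2 * k)%:R :> rat by rewrite ltr0n; lia.
have hr : (r < 2 * k)%N by rewrite ltn_pmod //; lia.
have ha0 : 0 <= a by rewrite divr_ge0 // ler0n.
have ha1 : a < 1 by rewrite /a ltr_pdivrMr // mul1r ltr_nat.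
have haz : a = 0 <-> r = 0%N.
  have k2 : (2 * k == 0)%N = false by apply/eqP; lia.
  split.
  - by move=> /eqP; rewrite /a mulf_eq0 invr_eq0 !pnatr_eq0 k2 orbF => /eqP.
  - by move=> hr0; rewrite /a hr0 mul0r.
have hval := pstar_val E p x k0; rewrite -/q -/r -/a in hval.
do 3 (split => //).
case: (hp x) => hpx.
- left; split => //; rewrite hval hpx; lra.
- have k2 : (0 < 2 * k)%N by lia.
  rewrite (@ceil_eq (deg E x) (2 * k)%N k2) in hpx.
  rewrite -/q -/r in hpx.
  case: eqP hpx => [hr0|hr0] hpx.
  + left; split => //; rewrite hval hpx; lra.
  + right; split; first by lia.
    split; first by rewrite lt_def ha0 andbT; apply/eqP => /haz.
    split => //; rewrite hval hpx -addn1 natrD; lra.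
Qed.

Lemma ps_bounds k (E : {set {set V}}) (p : V -> nat) x :
  (0 < k)%N -> proportional k E p -> -1 < pstar k E p x /\ pstar k E p x < 1.
Proof.
move=> k0 hp; have [ha0 [ha1 [_ h]]] := prop_info x k0 hp.
by case: h => [[_ ->]|[_ [? [_ ->]]]]; split; lra.
Qed.

Lemma ps_pos k (E : {set {set V}}) (p : V -> nat) x :
  (0 < k)%N -> proportional k E p -> 0 < pstar k E p x ->
  (0 < p x)%N /\ (p x).-1 = (deg E x %/ (2 * k))%N.
Proof.
move=> k0 hp; have [ha0 [ha1 [_ h]]] := prop_info x k0 hp.
case: h => [[_ ->]|[_ [_ [-> _]]]] hpos; last by [].
exfalso; lra.
Qed.

Lemma ps_neg k (E : {set {set V}}) (p : V -> nat) x :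
  (0 < k)%N -> proportional k E p -> pstar k E p x < 0 ->
  (p x).+1 = ((deg E x + (2 * k).-1) %/ (2 * k))%N.
Proof.
move=> k0 hp; have [ha0 [ha1 [haz h]]] := prop_info x k0 hp.
have k2 : (0 < 2 * k)%N by lia.
rewrite (@ceil_eq (deg E x) (2 * k)%N k2).
case: h => [[-> hv]|[_ [? [_ ->]]]] hneg; last by exfalso; lra.
case: eqP => // hr0; exfalso.
have : (deg E x %% (2 * k))%:R / (2 * k)%:R = 0 :> rat by apply/haz.
move=> h0; rewrite h0 in hv; lra.
Qed.

Lemma sum2 (R : Type) (idx : R) (op : Monoid.com_law idx) (F : V -> R) x y :
  x != y -> \big[op/idx]_v F v = op (op (F x) (F y)) (\big[op/idx]_(v | (v != x) && (v != y)) F v).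
Proof.
move=> xy; rewrite (bigD1 x) //= (bigD1 y) /=; last by rewrite eq_sym.
by rewrite Monoid.mulmA.
Qed.

Lemma window k (E : {set {set V}}) (m : V -> nat) x y :
  (0 < k)%N -> minimal k E m -> pstar k E m x - pstar k E m y <= 1.
Proof.
move=> k0 [[hdiv hsum] [hprop hmin]].
rewrite leNgt; apply/negP => hgt.
have [bx1 bx2] := ps_bounds x k0 hprop.
have [by1 by2] := ps_bounds y k0 hprop.
have hx : 0 < pstar k E m x by lra.
have hy : pstar k E m y < 0 by lra.
have xy : x != y by apply/eqP => exy; subst y; move: hgt; rewrite subrr ltNge ler01.
have [mx0 mxf] := ps_pos k0 hprop hx.
have myc := ps_neg k0 hprop hy.
pose p' v := if v == x then (m x).-1 else if v == y then (m y).+1 else m v.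
have p'x : p' x = (m x).-1 by rewrite /p' eqxx.
have p'y : p' y = (m y).+1 by rewrite /p' eqxx eq_sym (negbTE xy).
have p'o v : v != x -> v != y -> p' v = m v by move=> /negbTE h1 /negbTE h2; rewrite /p' h1 h2.
have pre : precentral k E p'.
  split => //; rewrite -hsum (@sum2 _ _ _ _ _ _ xy) [in RHS](@sum2 _ _ _ _ _ _ xy) p'x p'y.
  rewrite (eq_bigr m) //; last by move=> v /andP [h1 h2]; apply: p'o.
  by rewrite /= addnS -addSn prednK.
have prop : proportional k E p'.
  move=> v; case: (eqVneq v x) => [->|vx]; first by left; rewrite p'x.
  case: (eqVneq v y) => [->|vy]; first by right; rewrite p'y.
  by rewrite p'o //; apply: hprop.
have := hmin p' pre prop.
rewrite (@sum2 _ _ _ _ _ _ xy) [X in _ <= X](@sum2 _ _ _ _ _ _ xy).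
rewrite [X in _ <= _ + X](eq_bigr (fun v => `|pstar k E m v|)); last first.
  by move=> v /andP [h1 h2]; rewrite /pstar p'o.
have e1 : pstar k E p' x = pstar k E m x - 1.
  rewrite /pstar p'x -{2}(prednK mx0) -natr1; ring.
have e2 : pstar k E p' y = pstar k E m y + 1.
  by rewrite /pstar p'y -natr1; ring.
rewrite e1 e2 (gtr0_norm hx) (ltr0_norm hy) (ltr0_norm (_ : pstar k E m x - 1 < 0)); last by lra.
rewrite (gtr0_norm (_ : 0 < pstar k E m y + 1)); last by lra.
rewrite /= leNgt => /negP; apply; lra.
Qed.

End Part4.


Section Part5.
Variable V : finType.
Local Open Scope ring_scope.

Lemma sum_compl (f : V -> rat) (T : {set V}) : \sum_x f x = 0 ->
  \sum_(y in ~: T) f y = - \sum_(x in T) f x.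
Proof.
move=> h0; rewrite (bigID (fun x => x \in T)) /= in h0.
have e : \sum_(y in ~: T) f y = \sum_(y | y \notin T) f y by apply: eq_bigl => y; rewrite inE.
by rewrite e; apply/eqP; rewrite -addr_eq0 addrC h0.
Qed.

Lemma dsum (f : V -> rat) (T : {set V}) : \sum_x f x = 0 ->
  (#|V|)%:R * \sum_(x in T) f x = \sum_(x in T) \sum_(y in ~: T) (f x - f y).
Proof.
move=> h0.
rewrite [RHS](eq_bigr (fun x => (#|~: T|)%:R * f x + \sum_(x in T) f x)); last first.
  by move=> x _; rewrite big_split /= sumr_const sumrN (sum_compl T h0) opprK mulr_natl.
rewrite big_split /= sumr_const -mulr_sumr -(cardsC T) natrD -mulr_natl; ring.
Qed.

Lemma dsum_le1 (f : V -> rat) (T : {set V}) :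
  (forall x y, x \in T -> y \notin T -> f x - f y <= 1) ->
  \sum_(x in T) \sum_(y in ~: T) (f x - f y) <= (#|T| * #|~: T|)%:R.
Proof.
move=> h.
apply: le_trans (_ : \sum_(x in T) \sum_(y in ~: T) (1 : rat) <= _).
  apply: ler_sum => x xT; apply: ler_sum => y; rewrite inE => yT; exact: h.
by rewrite sumr_const sumr_const natrM mulr_natl.
Qed.

Lemma dsum_le2 (f : V -> rat) (T : {set V}) b :
  b \notin T -> - f b <= 1 ->
  (forall x y, x \in T -> y \notin T -> y != b -> f x - f y <= 1) ->
  \sum_(x in T) \sum_(y in ~: T) (f x - f y) <= \sum_(x in T) f x + (#|T| * #|~: T|)%:R.
Proof.
move=> bT fb h.
apply: le_trans (_ : \sum_(x in T) \sum_(y in ~: T) (1 + (if y == b then f x else 0)) <= _).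
  apply: ler_sum => x xT; apply: ler_sum => y; rewrite inE => yT.
  case: eqP => [->|/eqP yb]; first by lra.
  by rewrite addr0; apply: h.
have bT' : b \in ~: T by rewrite inE.
rewrite (eq_bigr (fun x => (#|~: T|)%:R + f x)); last first.
  move=> x _; rewrite big_split /= sumr_const (bigD1 b) //= eqxx big1 ?addr0 //.
  by move=> y /andP [_ /negbTE ->].
by rewrite big_split /= sumr_const addrC natrM mulr_natl.
Qed.

Lemma dsum_le3 (f : V -> rat) (T : {set V}) a : \sum_x f x = 0 ->
  a \in T -> f a <= 1 ->
  (forall x y, x \in T -> x != a -> y \notin T -> f x - f y <= 1) ->
  \sum_(x in T) \sum_(y in ~: T) (f x - f y) <= \sum_(x in T) f x + (#|T| * #|~: T|)%:R.
Proof.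
move=> h0 aT fa h.
apply: le_trans (_ : \sum_(x in T) \sum_(y in ~: T) (1 + (if x == a then - f y else 0)) <= _).
  apply: ler_sum => x xT; apply: ler_sum => y; rewrite inE => yT.
  case: eqP => [->|/eqP xa]; first by lra.
  by rewrite addr0; apply: h.
rewrite (eq_bigr (fun x => (#|~: T|)%:R + (if x == a then \sum_(x in T) f x else 0))); last first.
  move=> x _; rewrite big_split /= sumr_const; case: eqP => _; last by rewrite big1.
  by rewrite sumrN (sum_compl T h0) opprK.
rewrite big_split /= sumr_const [X in _ + X <= _](bigD1 a) //= eqxx.
rewrite [X in _ + (_ + X) <= _]big1 ?addr0; last by move=> x /andP [_ /negbTE ->].
by rewrite addrC natrM mulr_natl.
Qed.

End Part5.


Section Part6.
Variable V : finType.

Lemma handshake (E : {set {set V}}) : (forall e, e \in E -> #|e| = 2) ->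
  \sum_x deg E x = (2 * #|E|)%N.
Proof.
move=> H2; have := sum_deg_T E setT.
rewrite (eq_bigl (fun x => true)) => [->|x]; last by rewrite in_setT.
rewrite (eq_bigr (fun _ => 2%N)); last by move=> e eE; rewrite setIT H2.
by rewrite sum_nat_const mulnC.
Qed.

Local Open Scope ring_scope.

Lemma sum_ps0 k (E : {set {set V}}) (p : V -> nat) : (0 < k)%N ->
  (forall e, e \in E -> #|e| = 2) -> precentral k E p -> \sum_x pstar k E p x = 0.
Proof.
move=> k0 H2 [hdiv hsum].
rewrite /pstar sumrB -natr_sum hsum -mulr_suml -natr_sum handshake //.
set D := (2 * k)%N.
have D0 : D%:R != 0 :> rat by rewrite pnatr_eq0 /D; lia.
have e : (2 * #|E|)%N = ((#|E| %/ k) * D)%N by rewrite /D mulnCA divnK.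
rewrite e natrM; by field.
Qed.

Lemma fin1 (n P S : rat) : 0 <= P -> 1 <= n -> n * S <= P -> (n - 1) * S <= P.
Proof.
move=> hP hn h; case: (leP 0 S) => hS.
- rewrite mulrBl mul1r; lra.
- have : (n - 1) * S <= 0 by rewrite mulr_ge0_le0 //; [lra | lra].
  lra.
Qed.

Lemma fin2 (n P S : rat) : n * S <= S + P -> (n - 1) * S <= P.
Proof. move=> h; rewrite mulrBl mul1r; lra. Qed.

End Part6.


Section Part7.
Variable V : finType.
Local Open Scope ring_scope.

Lemma key k (E : {set {set V}}) (s : V -> nat) (T : {set V}) :
  (0 < k)%N -> (0 < #|V|)%N -> (forall e, e \in E -> #|e| = 2) -> suitable k E s ->
  ((#|V|)%:R - 1) * \sum_(x in T) pstar k E s x <= (#|T| * #|~: T|)%:R.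
Proof.
move=> k0 V0 H2 [hpre hcase].
set f := pstar k E s.
have h0 : \sum_x f x = 0 := sum_ps0 k0 H2 hpre.
have hd := dsum T h0.
have hn1 : 1 <= (#|V|)%:R :> rat by rewrite ler1n.
have hP : 0 <= (#|T| * #|~: T|)%:R :> rat by rewrite ler0n.
have ef m v : f v = pstar k E m v + (s v)%:R - (m v)%:R by rewrite /f /pstar; ring.
have D0 : 0 < (2 * k)%:R :> rat by rewrite ltr0n; lia.
case: hcase => [[m [hm [_ [_ hs]]]] | [[m [y [z [hm [[hdy hmy] [hsy [hmy1 [hz [hsz hso]]]]]]]]] | [m [y1 [y2 [z [hm [[he [hm1 hm2]] [hdeg [hs2 [hm21 [hz [hsz hso]]]]]]]]]]]]].
- apply: fin1 => //; rewrite hd; apply: dsum_le1 => x y _ _.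
  rewrite !(ef m) !hs !addrK; exact: window.
- have [_ [hprop _]] := hm.
  have zy : z != y by apply/eqP => ezy; move: hsz; rewrite ezy hsy hmy.
  have fy : f y = pstar k E m y - 1 by rewrite (ef m) hsy hmy; ring.
  have fz : f z = pstar k E m z + 1 by rewrite (ef m) hsz natrD; ring.
  have fo v : v != y -> v != z -> f v = pstar k E m v.
    by move=> vy vz; rewrite (ef m) hso // addrK.
  have claim x y' : y' != y -> f x - f y' <= 1.
    move=> y'y.
    have fy' : pstar k E m y' <= f y'.
      case: (eqVneq y' z) => [->|y'z]; first by rewrite fz; lra.
      by rewrite fo.
    case: (eqVneq x y) => [->|xy].
    + have [b1 b2] := ps_bounds y k0 hprop.
      have [b3 b4] := ps_bounds y' k0 hprop.
      rewrite fy; lra.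
    + case: (eqVneq x z) => [->|xz].
      * case: (eqVneq y' z) => [->|y'z]; first by rewrite subrr ler01.
        rewrite fz fo // ; have hzy := hz y'; lra.
      * rewrite fo //; have hw := window x y' k0 hm; lra.
  case: (boolP (y \in T)) => yT.
  + apply: fin1 => //; rewrite hd; apply: dsum_le1 => x y' _ y'T; apply: claim.
    by apply: contraNneq y'T => ->.
  + apply: fin2; rewrite hd; apply: (dsum_le2 yT).
    * rewrite /f /pstar hsy sub0r opprK ler_pdivrMr // mul1r ler_nat; lia.
    * by move=> x y' _ _ y'y; apply: claim.
- have [_ [hprop _]] := hm.
  have my2 : m y2 = 0%N by lia.
  have zy : z != y2 by apply/eqP => ezy; move: hsz; rewrite ezy hs2; lia.
  have fy : f y2 = pstar k E m y2 + 1 by rewrite (ef m) hs2 natrD; ring.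
  have fz : f z = pstar k E m z - 1 by rewrite (ef m) -hsz natrD; ring.
  have fo v : v != y2 -> v != z -> f v = pstar k E m v.
    by move=> vy vz; rewrite (ef m) hso // addrK.
  have claim x y' : x != y2 -> f x - f y' <= 1.
    move=> xy.
    have fx : f x <= pstar k E m x.
      case: (eqVneq x z) => [->|xz]; first by rewrite fz; lra.
      by rewrite fo.
    case: (eqVneq y' y2) => [->|y'y].
    + rewrite fy; have hw := window x y2 k0 hm; lra.
    + case: (eqVneq y' z) => [->|y'z].
      * case: (eqVneq x z) => [->|xz]; first by rewrite subrr ler01.
        rewrite fz fo //; have hzy := hz x; lra.
      * rewrite (fo y') //; have hw := window x y' k0 hm; lra.
  case: (boolP (y2 \in T)) => yT.
  + apply: fin2; rewrite hd; apply: (dsum_le3 h0 yT).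
    * rewrite /f /pstar hs2 my2.
      have : 0 <= (deg E y2)%:R / (2 * k)%:R :> rat by rewrite divr_ge0 // ler0n.
      lra.
    * by move=> x y' _ xy _; apply: claim.
  + apply: fin1 => //; rewrite hd; apply: dsum_le1 => x y' xT _; apply: claim.
    by apply: contraNneq yT => <-.
Qed.

End Part7.

End Helpers.
Import Helpers.

Theorem lemma17 (V : finType) (k n : nat) (A : {set (V * {set V})})
    (s : V -> nat) (T : {set V}) :
  3 <= k -> 3 * k + 1 < n -> #|V| = n -> admissible k n ->
  partial_star_design k A -> #|A| = u_nk n k -> ~ reducible n k A ->
  suitable k (leftover A) s ->
  5 <= #|T| -> #|T| <= n - 5 ->
  (0 <= delta k (leftover A) s T)%R.
Proof.
move=> hk hn hV hadm [hstar _] hA _ hsuit hT1 hT2.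
set E := leftover A.
have H2 : forall e, e \in E -> #|e| = 2 by move=> e; rewrite inE => /andP [/eqP -> _].
have k0 : 0 < k by lia.
have hn3 := n_ge hk hn hadm.
have V0 : 0 < #|V| by lia.
have hkey := key T k0 V0 H2 hsuit.
have hcl := cross_lb T hstar.
have hinc := inc_identity T H2.
have hTc : #|~: T| = n - #|T| by have := cardsC T; lia.
have harith := arith_K hk hn3.
rewrite -hA in harith.
move: hkey hcl hinc harith; rewrite hTc hV.
set t := #|T|.
set P := t * (n - t).
set K := k * #|A|.
move=> hkey hcl hinc harith.
have hP5 : 5 * (n - 5) <= P.
  rewrite /P; have : (t - 5) * (n - 5 - t) >= 0 by [].
  nia.
have hmain : 2 * k * P + (n - 1) * K <= (n - 1) * P.
  have hw : 2 * k <= n - 1 by lia.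
  set w := n - 1 - 2 * k in harith.
  have ew : n - 1 = w + 2 * k by rewrite /w subnK.
  have h1 : 5 * (n - 5) * w <= P * w by rewrite leq_mul2r hP5 orbT.
  have : (n - 1) * K <= P * w by apply: leq_trans harith h1.
  rewrite ew; lia.
have n1 : 1 <= n by lia.
rewrite -(ler_int rat) /delta intrB -!pmulrn.
set sS := \sum_(x in T) s x.
set dS := \sum_(x in T) deg E x.
set cr := cross E T.
set S := (\sum_(x in T) pstar k E s x)%R.
rewrite -/E -/cr in hcl.
have kk0 : (0 < (2 * k)%:R :> rat)%R by rewrite ltr0n; lia.
have hS : ((2 * k)%:R * S = (2 * k)%:R * sS%:R - dS%:R :> rat)%R.
  rewrite /S /pstar sumrB -natr_sum -mulr_suml -natr_sum -/sS -/dS.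
  by field; rewrite pnatr_eq0; lia.
have hi := congr1 (fun x : nat => (x%:R : rat)) hinc.
rewrite /= natrD natrM -/cr -/dS in hi.
have hm : ((2 * k)%:R * P%:R + (n - 1)%:R * K%:R <= (n - 1)%:R * P%:R :> rat)%R.
  by rewrite -!natrM -natrD ler_nat.
have hc : (P%:R <= cr%:R + K%:R :> rat)%R by rewrite -natrD ler_nat.
have hN : ((n - 1)%:R = n%:R - 1 :> rat)%R by rewrite natrB.
rewrite -hN in hkey.
have N0 : (0 < (n - 1)%:R :> rat)%R by rewrite ltr0n; lia.
have s1 : ((2 * k)%:R * ((n - 1)%:R * S) <= (2 * k)%:R * P%:R :> rat)%R.
  by rewrite ler_wpM2l // ltW.
have s3 : ((n - 1)%:R * P%:R <= (n - 1)%:R * (cr%:R + K%:R) :> rat)%R.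
  by rewrite ler_wpM2l // ltW.
have s4 : (0 <= (n - 1)%:R * (cr%:R - (2 * k)%:R * S) :> rat)%R.
  have e : ((n - 1)%:R * (cr%:R - (2 * k)%:R * S) = (n - 1)%:R * cr%:R - (2 * k)%:R * ((n - 1)%:R * S) :> rat)%R by ring.
  rewrite e mulrDr in s3 *; lra.
rewrite pmulr_rge0 // in s4.
rewrite natrM.
have e2 : ((2 * k)%:R = 2 * k%:R :> rat)%R by rewrite natrM.
rewrite e2 in hS s4.
lra.
Qed.
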